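(* Let $S = R\cup B$ be a finite set of points in the plane in general position (no three collinear), colored red ($R$) and blue ($B$), with $R$ and $B$ linearly separable. Suppose there exist $r\in R$, $b\in B$, an edge $e$ of $CH(R)$ and an edge $e'$ of $CH(B)$ such that the interiors of $e$ and of $e'$ both intersect the interior of the segment $\overline{rb}$. Then condition C1 or condition C2 holds.
   Context: A $4$-hole of $S$ is a simple quadrilateral with vertices in $S$ and no point of $S$ in its interior; it is convex if the quadrilateral is convex, and balanced if it has exactly two red and two blue vertices. $CH(X)$ is the convex hull of $X$; $\Delta xyz$ is the open triangle with vertices $x,y,z$; for non-collinear $a,b,c$, $\mathcal{W}(a,b,c)$ is the open convex region bounded by the rays from $a$ through $b$ and from $a$ through $c$. An edge $e$ of $CH(R)$ and an edge $e'$ of $CH(B)$ see each other if the union of their vertex sets is the vertex set of a balanced convex $4$-hole whose interior intersects neither $CH(R)$ nor $CH(B)$. Condition C1: there exist an edge $e$ of $CH(R)$ and an edge $e'$ of $CH(B)$ that see each other. Condition C2: there exist an edge $\overline{uv}$ of $CH(R)$ and points $b,z\in B$ with $z\in\Delta uvb$, $R\cap\Delta uvb=\emptyset$ and $R\cap\mathcal{W}(b,u,v)\ne\emptyset$; or the same statement holds with the roles of $R$ and $B$ swapped. *)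

(* Defs.v *)
From HB Require Import structures.
From mathcomp Require Import all_boot all_order all_algebra.
From mathcomp Require Import reals.
Set Implicit Arguments. Unset Strict Implicit. Unset Printing Implicit Defensive.
Import Order.TTheory GRing.Theory Num.Theory.
Local Open Scope ring_scope.

Section Geo.
Variable R : realType.

Definition point := (R * R)%type.

(* twice the signed area of (p,q,r): > 0 iff counterclockwise *)
Definition orient (p q r : point) : R :=
  (q.1 - p.1) * (r.2 - p.2) - (q.2 - p.2) * (r.1 - p.1).

Definition general_position (S : seq point) : Prop :=
  forall x y z, x \in S -> y \in S -> z \in S ->
    x != y -> y != z -> x != z -> orient x y z != 0.

Definition lin_separable (Rs Bs : seq point) : Prop :=
  exists a b c : R, (a != 0 \/ b != 0) /\
    (forall p, p \in Rs -> 0 < a * p.1 + b * p.2 + c) /\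
    (forall p, p \in Bs -> a * p.1 + b * p.2 + c < 0).

Definition in_hull (X : seq point) (p : point) : Prop :=
  exists w : point -> R, (forall x, x \in X -> 0 <= w x) /\
    \sum_(x <- X) w x = 1 /\
    p = (\sum_(x <- X) w x * x.1, \sum_(x <- X) w x * x.2).

(* {u,v} is an edge of CH(X) (X in general position) *)
Definition hull_edge (X : seq point) (u v : point) : Prop :=
  u \in X /\ v \in X /\ u != v /\
  ((forall w, w \in X -> 0 <= orient u v w) \/
   (forall w, w \in X -> orient u v w <= 0)).

Definition open_seg (a b x : point) : Prop :=
  exists t : R, 0 < t < 1 /\
    x = ((1 - t) * a.1 + t * b.1, (1 - t) * a.2 + t * b.2).

Definition ccw_quad (p1 p2 p3 p4 : point) : Prop :=
  (0 < orient p1 p2 p3 /\ 0 < orient p1 p2 p4) /\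
  (0 < orient p2 p3 p4 /\ 0 < orient p2 p3 p1) /\
  (0 < orient p3 p4 p1 /\ 0 < orient p3 p4 p2) /\
  (0 < orient p4 p1 p2 /\ 0 < orient p4 p1 p3).

Definition quad_interior (p1 p2 p3 p4 x : point) : Prop :=
  0 < orient p1 p2 x /\ 0 < orient p2 p3 x /\
  0 < orient p3 p4 x /\ 0 < orient p4 p1 x.

(* the edge uv of CH(Rs) and the edge u'v' of CH(Bs) see each other:
   {u,v,u',v'} is the vertex set of a balanced convex 4-hole of S = Rs ++ Bs
   whose interior meets neither CH(Rs) nor CH(Bs). *)
Definition see_each_other (Rs Bs : seq point) (u v u' v' : point) : Prop :=
  hull_edge Rs u v /\ hull_edge Bs u' v' /\
  exists p1 p2 p3 p4 : point,
    perm_eq [:: p1; p2; p3; p4] [:: u; v; u'; v'] /\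
    ccw_quad p1 p2 p3 p4 /\
    (forall x, x \in Rs ++ Bs -> ~ quad_interior p1 p2 p3 p4 x) /\
    (forall x, quad_interior p1 p2 p3 p4 x -> ~ in_hull Rs x /\ ~ in_hull Bs x).

Definition cond_C1 (Rs Bs : seq point) : Prop :=
  exists u v u' v' : point, see_each_other Rs Bs u v u' v'.

Definition open_tri (a b c x : point) : Prop :=
  exists l1 l2 l3 : R, 0 < l1 /\ 0 < l2 /\ 0 < l3 /\ l1 + l2 + l3 = 1 /\
    x = (l1 * a.1 + l2 * b.1 + l3 * c.1, l1 * a.2 + l2 * b.2 + l3 * c.2).

Definition wedge (a b c x : point) : Prop :=
  exists s t : R, 0 < s /\ 0 < t /\
    x = (a.1 + s * (b.1 - a.1) + t * (c.1 - a.1),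
         a.2 + s * (b.2 - a.2) + t * (c.2 - a.2)).

Definition cond_C2_half (X Y : seq point) : Prop :=
  exists u v b z : point,
    hull_edge X u v /\ b \in Y /\ z \in Y /\ open_tri u v b z /\
    (forall x, x \in X -> ~ open_tri u v b x) /\
    (exists x, x \in X /\ wedge b u v x).

Definition cond_C2 (Rs Bs : seq point) : Prop :=
  cond_C2_half Rs Bs \/ cond_C2_half Bs Rs.

End Geo.

(* Main.v *)
Require Import Defs.
From HB Require Import structures.
From mathcomp Require Import all_boot all_order all_algebra.
From mathcomp Require Import reals.
From mathcomp Require Import ring lra.
Import Order.TTheory GRing.Theory Num.Theory.
Local Open Scope ring_scope.

Section Aux.
Variable R : realType.
Implicit Types (a c d p q x y z w : point R).

Definition aff (al be ga : R) (p : point R) := al * p.1 + be * p.2 + ga.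

Lemma o_seg p q a c x (t : R) : x = ((1-t)*a.1+t*c.1, (1-t)*a.2+t*c.2) ->
  orient p q x = (1-t) * orient p q a + t * orient p q c.
Proof. move->; rewrite /orient /=; ring. Qed.

Lemma aff_seg al be ga a c x (t : R) : x = ((1-t)*a.1+t*c.1, (1-t)*a.2+t*c.2) ->
  aff al be ga x = (1-t) * aff al be ga a + t * aff al be ga c.
Proof. move->; rewrite /aff /=; ring. Qed.

Lemma frame_f al be ga r a c p :
  orient r a c * aff al be ga p =
  orient p a c * aff al be ga r + orient r p c * aff al be ga a + orient r a p * aff al be ga c.
Proof. rewrite /orient /aff; ring. Qed.

Lemma frame_o r a c p e1 e2 :
  orient r a c * orient e1 e2 p =
  orient p a c * orient e1 e2 r + orient r p c * orient e1 e2 a + orient r a p * orient e1 e2 c.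
Proof. rewrite /orient; ring. Qed.

Lemma tri_neg a c d p : orient a c d < 0 -> orient p c d < 0 ->
  orient a p d < 0 -> orient a c p < 0 -> open_tri a c d p.
Proof.
move=> K l1 l2 l3.
have k0 : orient a c d != 0 by rewrite lt_eqF.
have pos (e : R) : e < 0 -> 0 < e / orient a c d.
  by move=> he; rewrite nmulr_rgt0 // invr_lt0.
exists (orient p c d / orient a c d), (orient a p d / orient a c d),
  (orient a c p / orient a c d).
do 3! (split; first exact: pos).
split.
  have -> : orient p c d / orient a c d + orient a p d / orient a c d +
     orient a c p / orient a c d = (orient p c d + orient a p d + orient a c p) / orient a c d.
    by rewrite !mulrDl.
  have -> : orient p c d + orient a p d + orient a c p = orient a c d by rewrite /orient; ring.
  by rewrite divff.
move: k0; rewrite /orient => k0.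
by apply: injective_projections => /=; field.
Qed.

Lemma hull_aff X x al be ga : in_hull X x ->
  (forall p, p \in X -> 0 <= aff al be ga p) -> 0 <= aff al be ga x.
Proof.
move=> [w [w0 [ws ->]]] H.
have -> : aff al be ga (\sum_(x <- X) w x * x.1, \sum_(x <- X) w x * x.2) =
   \sum_(p <- X) w p * aff al be ga p.
  rewrite [RHS](eq_bigr (fun p => al * (w p * p.1) + be * (w p * p.2) + ga * w p)); last first.
    by move=> p _; rewrite /aff; ring.
  by rewrite !big_split /= -!mulr_sumr ws mulr1.
rewrite big_seq; apply: sumr_ge0 => p hp; apply: mulr_ge0; [exact: w0|exact: H].
Qed.

Lemma hull_orient X x u v : in_hull X x ->
  (forall p, p \in X -> 0 <= orient u v p) -> 0 <= orient u v x.
Proof.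
have E p : orient u v p = aff (- (v.2 - u.2)) (v.1 - u.1)
   (- (v.1 - u.1) * u.2 + (v.2 - u.2) * u.1) p by rewrite /orient /aff; ring.
move=> hx H; rewrite E; apply: hull_aff hx _ => p hp; rewrite -E; exact: H.
Qed.

Lemma open_seg_sym a c x : open_seg a c x -> open_seg c a x.
Proof.
move=> [t [/andP [t0 t1] ->]]; exists (1 - t); split.
  apply/andP; split; lra.
congr (_, _); ring.
Qed.


Lemma core (X Y : seq (point R)) (al be ga : R) (r b : point R) u v p q x y :
  general_position (X ++ Y) ->
  (forall z, z \in X -> 0 < aff al be ga z) ->
  (forall z, z \in Y -> aff al be ga z < 0) ->
  r \in X -> b \in Y -> hull_edge X u v -> hull_edge Y p q ->
  (forall w, w \in X -> 0 <= orient u v w) ->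
  (forall w, w \in Y -> 0 <= orient p q w) ->
  open_seg u v x -> open_seg r b x -> open_seg p q y -> open_seg r b y ->
  (0 < orient u v p \/ 0 < orient u v q) -> cond_C2_half Y X.
Proof.
move=> gp hX hY rX bY heX heY H1 H2
  [t [/andP[t0 t1] hx1]] [s [/andP[s0 s1] hx2]]
  [t' [/andP[t'0 t'1] hy1]] [s' [/andP[s'0 s'1] hy2]] hD.
have [uX [vX [uv _]]] := heX.
have [pY [qY [pq _]]] := heY.
have dXY z1 z2 : z1 \in X -> z2 \in Y -> z1 != z2.
  move=> h1 h2; apply/eqP=> e; move: (hX _ h1) (hY _ h2); rewrite e; lra.
have dYX z1 z2 : z1 \in Y -> z2 \in X -> z1 != z2.
  by move=> h1 h2; rewrite eq_sym; apply: dXY.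
have inX z : z \in X -> z \in X ++ Y by rewrite mem_cat => ->.
have inY z : z \in Y -> z \in X ++ Y by rewrite mem_cat => ->; rewrite orbT.
have Dbn : orient u v b != 0.
  exact: gp (inX _ uX) (inX _ vX) (inY _ bY) uv (dXY _ _ vX bY) (dXY _ _ uX bY).
have e1 : (1-s) * orient u v r + s * orient u v b = 0.
  by rewrite -(o_seg _ _ _ _ _ _ hx2) hx1 /orient /=; ring.
have Dr0 := H1 _ rX.
have Db : orient u v b < 0.
  rewrite lt_neqAle Dbn /= leNgt; apply/negP => h; nra.
have Dr : 0 < orient u v r by nra.
have Ern : orient p q r != 0.
  exact: gp (inY _ pY) (inY _ qY) (inX _ rX) pq (dYX _ _ qY rX) (dYX _ _ pY rX).
have e2 : (1-s') * orient p q r + s' * orient p q b = 0.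
  by rewrite -(o_seg _ _ _ _ _ _ hy2) hy1 /orient /=; ring.
have Eb0 := H2 _ bY.
have Er : orient p q r < 0.
  rewrite lt_neqAle Ern /= leNgt; apply/negP => h; nra.
have Eb : 0 < orient p q b by nra.
have rub : 0 < orient r u b.
  have a1 : orient r u x = t * orient u v r by rewrite hx1 /orient /=; ring.
  have a2 : orient r u x = s * orient r u b by rewrite hx2 /orient /=; ring.
  nra.
have rvb : orient r v b < 0.
  have a1 : orient r v x = - (1 - t) * orient u v r by rewrite hx1 /orient /=; ring.
  have a2 : orient r v x = s * orient r v b by rewrite hx2 /orient /=; ring.
  nra.
have rpb : orient r p b < 0.
  have a1 : orient r p y = t' * orient p q r by rewrite hy1 /orient /=; ring.
  have a2 : orient r p y = s' * orient r p b by rewrite hy2 /orient /=; ring.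
  nra.
have rqb : 0 < orient r q b.
  have a1 : orient r q y = - (1 - t') * orient p q r by rewrite hy1 /orient /=; ring.
  have a2 : orient r q y = s' * orient r q b by rewrite hy2 /orient /=; ring.
  nra.
have fr := hX _ rX; have fu := hX _ uX; have fv := hX _ vX.
have fp := hY _ pY; have fq := hY _ qY.
have fy : aff al be ga y < 0.
  rewrite (aff_seg _ _ _ _ _ _ _ hy1); nra.
have rv : r != v.
  apply/eqP => e; move: Dr; rewrite e.
  have z0 : orient u v v = 0 by rewrite /orient; ring.
  by rewrite z0 ltxx.
have ru : r != u.
  apply/eqP => e; move: Dr; rewrite e.
  have z0 : orient u v u = 0 by rewrite /orient; ring.
  by rewrite z0 ltxx.
have noY : forall w, w \in Y -> ~ open_tri p q r w.
  move=> w wY [l1 [l2 [l3 [l10 [l20 [l30 [ls hw]]]]]]].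
  have el1 : l1 = 1 - l2 - l3 by lra.
  have : orient p q w = l3 * orient p q r by rewrite hw el1 /orient /=; ring.
  have := H2 _ wY; nra.
have wb : exists w, w \in Y /\ wedge r p q w.
  exists b; split => //.
  have e := etrans (esym hy1) hy2.
  have f1 := congr1 fst e; have f2 := congr1 snd e; simpl in f1, f2.
  have s'n : s' != 0 by rewrite gt_eqF.
  exists ((1 - t') / s'), (t' / s'); split; first by apply: divr_gt0; lra.
  split; first by apply: divr_gt0; lra.
  apply: injective_projections => /=.
    have -> : b.1 = (((1-s')*r.1 + s'*b.1) - (1-s')*r.1)/s' by field.
    by rewrite -f1; field.
  have -> : b.2 = (((1-s')*r.2 + s'*b.2) - (1-s')*r.2)/s' by field.
  by rewrite -f2; field.
case: hD => hD.
-
  have ii : orient r p v < 0.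
    have n : orient r p v != 0.
      exact: gp (inX _ rX) (inY _ pY) (inX _ vX) (dXY _ _ rX pY) (dYX _ _ pY vX) rv.
    rewrite lt_neqAle n /= leNgt; apply/negP => h.
    have I := frame_o r u v p r b.
    have z1 : orient r b r = 0 by rewrite /orient; ring.
    have z2 : orient r b p = - orient r p b by rewrite /orient; ring.
    have z3 : orient r b u = - orient r u b by rewrite /orient; ring.
    have z4 : orient r b v = - orient r v b by rewrite /orient; ring.
    have z5 : orient r u v = orient u v r by rewrite /orient; ring.
    rewrite z1 z2 z3 z4 z5 in I.
    have rup : 0 < orient r u p by nra.
    have J := frame_f al be ga r u v p.
    have z6 : orient p u v = orient u v p by rewrite /orient; ring.
    rewrite z5 z6 in J.
    nra.
  have i : orient r v q < 0.
    have n : orient r v q != 0.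
      exact: gp (inX _ rX) (inX _ vX) (inY _ qY) rv (dXY _ _ vX qY) (dXY _ _ rX qY).
    rewrite lt_neqAle n /= leNgt; apply/negP => h.
    have a1 : orient v r y = (1-t') * orient r p v - t' * orient r v q
      by rewrite hy1 /orient /=; ring.
    have a2 : orient v r y = - s' * orient r v b by rewrite hy2 /orient /=; ring.
    nra.
  have iii : orient p q v < 0.
    have n : orient p q v != 0.
      exact: gp (inY _ pY) (inY _ qY) (inX _ vX) pq (dYX _ _ qY vX) (dYX _ _ pY vX).
    rewrite lt_neqAle n /= leNgt; apply/negP => h.
    have J := frame_f al be ga r p y v.
    have a1 : orient r p y = t' * orient p q r by rewrite hy1 /orient /=; ring.
    have a2 : orient v p y = t' * orient p q v by rewrite hy1 /orient /=; ring.
    have a3 : orient r v y = s' * orient r v b by rewrite hy2 /orient /=; ring.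
    have b1 : orient r p y < 0 by rewrite a1 pmulr_rlt0.
    have b2 : 0 < orient v p y by rewrite a2 pmulr_rgt0.
    have b3 : orient r v y < 0 by rewrite a3 pmulr_rlt0.
    nra.
  exists p, q, r, v; split => //; split => //; split => //; split.
    apply: tri_neg => //.
      by have -> : orient v q r = orient r v q by rewrite /orient; ring.
    by have -> : orient p v r = orient r p v by rewrite /orient; ring.
  by split.
-
  have ii : orient r u q < 0.
    have n : orient r u q != 0.
      exact: gp (inX _ rX) (inX _ uX) (inY _ qY) ru (dXY _ _ uX qY) (dXY _ _ rX qY).
    rewrite lt_neqAle n /= leNgt; apply/negP => h.
    have I := frame_o r u v q r b.
    have z1 : orient r b r = 0 by rewrite /orient; ring.
    have z2 : orient r b q = - orient r q b by rewrite /orient; ring.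
    have z3 : orient r b u = - orient r u b by rewrite /orient; ring.
    have z4 : orient r b v = - orient r v b by rewrite /orient; ring.
    have z5 : orient r u v = orient u v r by rewrite /orient; ring.
    rewrite z1 z2 z3 z4 z5 in I.
    have rqv : 0 < orient r q v by nra.
    have J := frame_f al be ga r u v q.
    have z6 : orient q u v = orient u v q by rewrite /orient; ring.
    rewrite z5 z6 in J.
    nra.
  have i : orient r p u < 0.
    have n : orient r p u != 0.
      exact: gp (inX _ rX) (inY _ pY) (inX _ uX) (dXY _ _ rX pY) (dYX _ _ pY uX) ru.
    rewrite lt_neqAle n /= leNgt; apply/negP => h.
    have a1 : orient u r y = (1-t') * orient r p u - t' * orient r u q
      by rewrite hy1 /orient /=; ring.
    have a2 : orient u r y = - s' * orient r u b by rewrite hy2 /orient /=; ring.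
    nra.
  have iii : orient p q u < 0.
    have n : orient p q u != 0.
      exact: gp (inY _ pY) (inY _ qY) (inX _ uX) pq (dYX _ _ qY uX) (dYX _ _ pY uX).
    rewrite lt_neqAle n /= leNgt; apply/negP => h.
    have J := frame_f al be ga r q y u.
    have a1 : orient r q y = - (1 - t') * orient p q r by rewrite hy1 /orient /=; ring.
    have a2 : orient u q y = - (1 - t') * orient p q u by rewrite hy1 /orient /=; ring.
    have a3 : orient r u y = s' * orient r u b by rewrite hy2 /orient /=; ring.
    have a4 : orient r q u = - orient r u q by rewrite /orient; ring.
    have b1 : 0 < orient r q y by rewrite a1 mulNr oppr_gt0 pmulr_rlt0 // subr_gt0.
    have b2 : orient u q y < 0 by rewrite a2 mulNr oppr_lt0 pmulr_rgt0 // subr_gt0.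
    have b3 : 0 < orient r u y by rewrite a3 pmulr_rgt0.
    nra.
  exists p, q, r, u; split => //; split => //; split => //; split.
    apply: tri_neg => //.
      by have -> : orient u q r = orient r u q by rewrite /orient; ring.
    by have -> : orient p u r = orient r p u by rewrite /orient; ring.
  by split.
Qed.

Lemma gp_swap (X Y : seq (point R)) : general_position (X ++ Y) -> general_position (Y ++ X).
Proof.
move=> gp a c d ha hc hd; apply: gp; by rewrite mem_cat orbC -mem_cat.
Qed.

Lemma norm_edge (X : seq (point R)) u v x : hull_edge X u v -> open_seg u v x ->
  exists u1 v1, hull_edge X u1 v1 /\ (forall w, w \in X -> 0 <= orient u1 v1 w) /\
    open_seg u1 v1 x.
Proof.
move=> [uX [vX [uv [H|H]]]] hs.
  by exists u, v; split => //; split => //; split => //; split => //; left.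
exists v, u.
have H' : forall w, w \in X -> 0 <= orient v u w.
  move=> w /H h; have -> : orient v u w = - orient u v w by rewrite /orient; ring.
  by rewrite oppr_ge0.
split; first by split => //; split => //; split; [rewrite eq_sym | left].
by split => //; apply: open_seg_sym.
Qed.

Lemma main_norm (Rs Bs : seq (point R)) (al be ga : R) (r b : point R) u v p q x y :
  general_position (Rs ++ Bs) ->
  (forall z, z \in Rs -> 0 < aff al be ga z) ->
  (forall z, z \in Bs -> aff al be ga z < 0) ->
  r \in Rs -> b \in Bs -> hull_edge Rs u v -> hull_edge Bs p q ->
  (forall w, w \in Rs -> 0 <= orient u v w) ->
  (forall w, w \in Bs -> 0 <= orient p q w) ->
  open_seg u v x -> open_seg r b x -> open_seg p q y -> open_seg r b y ->
  cond_C1 Rs Bs \/ cond_C2 Rs Bs.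
Proof.
move=> gp hX hY rX bY heX heY H1 H2 sx1 sx2 sy1 sy2.
have [uX [vX [uv _]]] := heX.
have [pY [qY [pq _]]] := heY.
have dXY z1 z2 : z1 \in Rs -> z2 \in Bs -> z1 != z2.
  move=> h1 h2; apply/eqP=> e; move: (hX _ h1) (hY _ h2); rewrite e; lra.
have dYX z1 z2 : z1 \in Bs -> z2 \in Rs -> z1 != z2.
  by move=> h1 h2; rewrite eq_sym; apply: dXY.
have inX z : z \in Rs -> z \in Rs ++ Bs by rewrite mem_cat => ->.
have inY z : z \in Bs -> z \in Rs ++ Bs by rewrite mem_cat => ->; rewrite orbT.
have n1 : orient u v p != 0.
  exact: gp (inX _ uX) (inX _ vX) (inY _ pY) uv (dXY _ _ vX pY) (dXY _ _ uX pY).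
have n2 : orient u v q != 0.
  exact: gp (inX _ uX) (inX _ vX) (inY _ qY) uv (dXY _ _ vX qY) (dXY _ _ uX qY).
have n3 : orient p q u != 0.
  exact: gp (inY _ pY) (inY _ qY) (inX _ uX) pq (dYX _ _ qY uX) (dYX _ _ pY uX).
have n4 : orient p q v != 0.
  exact: gp (inY _ pY) (inY _ qY) (inX _ vX) pq (dYX _ _ qY vX) (dYX _ _ pY vX).
have [hD|hD] : (0 < orient u v p \/ 0 < orient u v q) \/
               (orient u v p < 0 /\ orient u v q < 0).
  move: n1 n2; rewrite !neq_lt => /orP [a1|a1] /orP [a2|a2]; by [right | left; by [left|right]].
  right; right; exact: core gp hX hY rX bY heX heY H1 H2 sx1 sx2 sy1 sy2 hD.
have [hE|hE] : (0 < orient p q u \/ 0 < orient p q v) \/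
               (orient p q u < 0 /\ orient p q v < 0).
  move: n3 n4; rewrite !neq_lt => /orP [a1|a1] /orP [a2|a2]; by [right | left; by [left|right]].
  right; left.
  have hY' : forall z, z \in Bs -> 0 < aff (- al) (- be) (- ga) z.
    by move=> z /hY; rewrite /aff; lra.
  have hX' : forall z, z \in Rs -> aff (- al) (- be) (- ga) z < 0.
    by move=> z /hX; rewrite /aff; lra.
  have K := (@core Bs Rs (- al) (- be) (- ga) b r p q u v y x (gp_swap _ _ gp) hY' hX' bY rX heY heX H2 H1
     sy1 (open_seg_sym _ _ _ sy2) sx1 (open_seg_sym _ _ _ sx2) hE).
  exact K.
case: hD => d1 d2; case: hE => e1 e2.
left; exists u, v, p, q; split => //; split => //.
exists v, u, q, p; split.
  change (perm_eq (([:: v] ++ [:: u]) ++ ([:: q] ++ [:: p]))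
    (([:: u] ++ [:: v]) ++ ([:: p] ++ [:: q]))).
  by apply: perm_cat; rewrite perm_catC.
have i1 : orient v u q = - orient u v q by rewrite /orient; ring.
have i2 : orient v u p = - orient u v p by rewrite /orient; ring.
have i3 : orient u q p = - orient p q u by rewrite /orient; ring.
have i4 : orient u q v = - orient u v q by rewrite /orient; ring.
have i5 : orient q p v = - orient p q v by rewrite /orient; ring.
have i6 : orient q p u = - orient p q u by rewrite /orient; ring.
have i7 : orient p v u = - orient u v p by rewrite /orient; ring.
have i8 : orient p v q = - orient p q v by rewrite /orient; ring.
split.
  rewrite /ccw_quad i1 i2 i3 i4 i5 i6 i7 i8.
  by repeat split; lra.
have j1 z : orient v u z = - orient u v z by rewrite /orient; ring.
have j2 z : orient q p z = - orient p q z by rewrite /orient; ring.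
split.
  move=> z; rewrite mem_cat => /orP [zX|zY] [h1 [h2 [h3 h4]]].
    by move: (H1 _ zX) h1; rewrite j1; lra.
  by move: (H2 _ zY) h3; rewrite j2; lra.
move=> z [h1 [h2 [h3 h4]]]; split => hh.
  by move: (hull_orient _ _ _ _ hh H1) h1; rewrite j1; lra.
by move: (hull_orient _ _ _ _ hh H2) h3; rewrite j2; lra.
Qed.

End Aux.

Theorem lemma8 (R : realType) (Rs Bs : seq (point R)) :
  general_position (Rs ++ Bs) ->
  lin_separable Rs Bs ->
  forall (r b u v u' v' : point R),
    r \in Rs -> b \in Bs ->
    hull_edge Rs u v -> hull_edge Bs u' v' ->
    (exists x, open_seg u v x /\ open_seg r b x) ->
    (exists x, open_seg u' v' x /\ open_seg r b x) ->
    cond_C1 Rs Bs \/ cond_C2 Rs Bs.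
Proof.
move=> gp [al [be [ga [_ [hR hB]]]]] r b u v u' v' rR bB heR heB [x [sx1 sx2]] [y [sy1 sy2]].
have [u1 [v1 [e1 [H1 s1]]]] := norm_edge _ _ _ _ _ heR sx1.
have [u2 [v2 [e2 [H2 s2]]]] := norm_edge _ _ _ _ _ heB sy1.
exact: (@main_norm R Rs Bs al be ga r b _ _ _ _ _ _ gp hR hB rR bB e1 e2 H1 H2 s1 sx2 s2 sy2).
Qed.
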